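(* Let $\boldsymbol{A}$ be the adjacency matrix of an undirected graph without self-loops on a finite vertex set $\boldsymbol{V}=\{1,\dots,N\}$. Let $\mathcal{R}_e\subset\boldsymbol{V}$ be a nonempty set of egos and $\mathcal{R}_a\subset\boldsymbol{V}\setminus\mathcal{R}_e$ a nonempty set of alters, $n_a=|\mathcal{R}_a|$, where each alter $j\in\mathcal{R}_a$ has a unique recruiting ego $e(j)\in\mathcal{R}_e$ with $A_{j\,e(j)}=1$. Let $\widetilde{\boldsymbol{A}}$ be the observed adjacency matrix, with $\widetilde A_{ij}=\widetilde A_{ji}=1$ if and only if $i\in\mathcal{R}_a$ and $j=e(i)$ (all other entries $0$). Let $\boldsymbol{Z}\in\{0,1\}^N$ have independent components with $\Pr(Z_i=1)=p_z\,\mathbb{I}\{i\in\mathcal{R}_e\}$ for a known $p_z\in(0,1)$. Define $F_i=\mathbb{I}\{\sum_{j\neq i}Z_jA_{ij}>0\}$ and $\widetilde F_i=\mathbb{I}\{\sum_{j\neq i}Z_j\widetilde A_{ij}>0\}$. Each unit $i\in\mathcal{R}_e\cup\mathcal{R}_a$ has fixed real potential outcomes $Y_i(z,f)$, $z,f\in\{0,1\}$, and observed outcome $Y_i=\sum_{z,f\in\{0,1\}}Y_i(z,f)\mathbb{I}\{Z_i=z,F_i=f\}$. For $i\in\mathcal{R}_a$ let $\pi_i^a=\Pr(F_i=1)$ (over $\boldsymbol{Z}$), and assume $\pi_i^a<1$ for all $i\in\mathcal{R}_a$. Define $$IE=\frac1{n_a}\sum_{i\in\mathcal{R}_a}[Y_i(0,1)-Y_i(0,0)],\qquad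 \widehat{IE}_{adj}=\frac1{n_a}\sum_{i\in\mathcal{R}_a}\frac{1-p_z}{1-\pi_i^a}\Big[\frac{\mathbb{I}\{\widetilde F_i=1\}Y_i}{p_z}-\frac{\mathbb{I}\{\widetilde F_i=0\}Y_i}{1-p_z}\Big].$$ Then $\mathbb{E}_{\boldsymbol{Z}}[\widehat{IE}_{adj}]=IE$.
   Context: Design-based setting: the network, the sample, the recruitment map and the potential outcomes are fixed; the only randomness is the treatment assignment $\boldsymbol{Z}$, and expectations are over $\boldsymbol{Z}$. *)

(* Defs.v *)
From mathcomp Require Import all_boot all_order all_algebra.
Set Implicit Arguments. Unset Strict Implicit. Unset Printing Implicit Defensive.
Import Order.TTheory GRing.Theory Num.Theory.
Local Open Scope ring_scope.

Notation assignment N := {ffun 'I_N -> bool}.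

Definition prZ (R : numFieldType) (N : nat) (q : 'I_N -> R) (z : assignment N) : R :=
  \prod_(i < N) (if z i then q i else 1 - q i).

Definition expZ (R : numFieldType) (N : nat) (q : 'I_N -> R)
  (X : assignment N -> R) : R :=
  \sum_(z : assignment N) prZ q z * X z.

Definition qEgo (R : numFieldType) (N : nat) (pz : R) (Re : {set 'I_N}) (i : 'I_N) : R :=
  if i \in Re then pz else 0.

Definition exposure (N : nat) (A : 'I_N -> 'I_N -> bool) (z : assignment N) (i : 'I_N) : bool :=
  (0 < \sum_(j < N | j != i) (z j * A i j))%N.

Definition Aobs (N : nat) (Ra : {set 'I_N}) (e : 'I_N -> 'I_N) (i j : 'I_N) : bool :=
  ((i \in Ra) && (j == e i)) || ((j \in Ra) && (i == e j)).

Definition Yobs (R : numFieldType) (N : nat) (A : 'I_N -> 'I_N -> bool)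
  (Y : 'I_N -> bool -> bool -> R) (z : assignment N) (i : 'I_N) : R :=
  \sum_(a : bool) \sum_(f : bool)
     Y i a f * ((z i == a) && (exposure A z i == f))%:R.

(* Main.v *)
Require Import Defs.
From mathcomp Require Import all_boot all_order all_algebra.
From mathcomp Require Import ring lra.
Import Order.TTheory GRing.Theory Num.Theory.
Local Open Scope ring_scope.

Lemma prZ_sum (R : numFieldType) N (q : 'I_N -> R) :
  \sum_(z : assignment N) prZ q z = 1.
Proof.
rewrite /prZ -(bigA_distr_bigA (fun i b => if b then q i else 1 - q i)).
by apply: big1 => i _; rewrite big_bool /= addrC subrK.
Qed.

Lemma prZ_coord (R : numFieldType) N (q : 'I_N -> R) k :
  expZ q (fun z => (z k)%:R) = q k.
Proof.
rewrite /expZ.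
pose G i (b : bool) := if i == k then (if b then q i else 0) else (if b then q i else 1 - q i).
transitivity (\sum_(z : assignment N) \prod_i G i (z i)).
  apply: eq_bigr => z _; rewrite /prZ (bigD1 k) //= [RHS](bigD1 k) //= /G eqxx.
  rewrite mulrC mulrA; congr (_ * _); last first.
    by apply: eq_bigr => i /negbTE ->.
  by case: (z k); rewrite /= ?mul1r ?mul0r.
rewrite -(bigA_distr_bigA G) (bigD1 k) //= big_bool /G eqxx /= addr0.
rewrite big1 ?mulr1 // => i /negbTE ik; by rewrite big_bool ik /= addrC subrK.
Qed.

Lemma prZ_zero (R : numFieldType) N (q : 'I_N -> R) (z : assignment N) i :
  q i = 0 -> z i -> prZ q z = 0.
Proof. by move=> qi zi; rewrite /prZ (bigD1 i) //= zi qi mul0r. Qed.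

Lemma expZ_lin (R : numFieldType) N (q : 'I_N -> R) (X X1 X2 : assignment N -> R) a b c :
  (forall z, prZ q z * X z = prZ q z * (a * X1 z + b * X2 z + c)) ->
  expZ q X = a * expZ q X1 + b * expZ q X2 + c.
Proof.
move=> H; rewrite /expZ -[c in RHS]mul1r -(@prZ_sum _ _ q) mulr_suml !mulr_sumr -!big_split.
by apply: eq_bigr => z _; rewrite H /=; ring.
Qed.

Lemma expZ_sum (R : numFieldType) N (q : 'I_N -> R) (S : {set 'I_N}) k
  (G : 'I_N -> assignment N -> R) :
  expZ q (fun z => k * \sum_(i in S) G i z) = k * \sum_(i in S) expZ q (G i).
Proof.
rewrite /expZ; transitivity (\sum_(z : assignment N) \sum_(i in S) k * (prZ q z * G i z)).
  by apply: eq_bigr => z _; rewrite mulrCA !mulr_sumr.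
by rewrite exchange_big mulr_sumr; apply: eq_bigr => i _; rewrite mulr_sumr.
Qed.

Lemma exposure_obs N (Ra : {set 'I_N}) e (z : assignment N) i :
  i \in Ra -> (forall j, j \in Ra -> e j \notin Ra) -> e i != i ->
  exposure (Aobs Ra e) z i = z (e i).
Proof.
move=> iRa eRa ei; rewrite /exposure (bigD1 (e i)) //= big1.
  by rewrite /Aobs iRa eqxx /=; case: (z (e i)).
move=> j /andP[ji jei]; rewrite /Aobs iRa (negbTE jei) /=.
case jRa: (j \in Ra); last by rewrite muln0.
case: (i =P e j) => [ie|_]; last by rewrite muln0.
by move: (eRa j jRa); rewrite -ie iRa.
Qed.

Lemma exposure_of N (A : 'I_N -> 'I_N -> bool) (z : assignment N) i k :
  A i k -> k != i -> z k -> exposure A z i.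
Proof. by move=> Ak ki zk; rewrite /exposure (bigD1 k) //= Ak zk. Qed.

Theorem proposition2 (R : realFieldType) (N : nat)
  (A : 'I_N -> 'I_N -> bool)
  (Asym : forall i j, A i j = A j i)
  (Anoloop : forall i, A i i = false)
  (Re Ra : {set 'I_N})
  (Re_ne : Re != set0) (Ra_ne : Ra != set0)
  (Ra_disj : [disjoint Ra & Re])
  (e : 'I_N -> 'I_N)
  (e_ego : forall j, j \in Ra -> e j \in Re)
  (e_adj : forall j, j \in Ra -> A j (e j))
  (pz : R) (pz_gt0 : 0 < pz) (pz_lt1 : pz < 1)
  (Y : 'I_N -> bool -> bool -> R)
  (pia : 'I_N -> R)
  (pia_def : forall i, pia i =
     expZ (qEgo pz Re) (fun z => (exposure A z i)%:R))
  (pia_lt1 : forall i, i \in Ra -> pia i < 1) :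
  expZ (qEgo pz Re) (fun z =>
    (#|Ra|%:R)^-1 * \sum_(i in Ra)
      ((1 - pz) / (1 - pia i)) *
      ((exposure (Aobs Ra e) z i)%:R * Yobs A Y z i / pz
       - (~~ exposure (Aobs Ra e) z i)%:R * Yobs A Y z i / (1 - pz)))
  = (#|Ra|%:R)^-1 * \sum_(i in Ra) (Y i false true - Y i false false).
Proof.
rewrite expZ_sum; congr (_ * _); apply: eq_bigr => i iRa.
have ei_Re := e_ego i iRa.
have iNRe : (i \in Re) = false by apply: (disjointFr Ra_disj iRa).
have ei_i : e i != i by apply/eqP => h; rewrite h iNRe in ei_Re.
have eRa : forall j, j \in Ra -> e j \notin Ra.
  by move=> j jRa; rewrite (disjointFl Ra_disj (e_ego j jRa)).
have qi0 : qEgo pz Re i = 0 by rewrite /qEgo iNRe.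
have qei : qEgo pz Re (e i) = pz by rewrite /qEgo ei_Re.
have pz0 : pz != 0 by rewrite gt_eqF.
have pz1 : 1 - pz != 0 by rewrite subr_eq0 eq_sym lt_eqF.
have pi1 : 1 - pia i != 0 by rewrite subr_eq0 eq_sym lt_eqF // pia_lt1.
set c := (1 - pz) / (1 - pia i).
rewrite (@expZ_lin _ _ _ _ (fun z => (z (e i))%:R) (fun z => (exposure A z i)%:R)
   (c * Y i false true / pz + c * Y i false true / (1 - pz))
   (c * (Y i false false - Y i false true) / (1 - pz))
   (- (c * Y i false false / (1 - pz)))).
  rewrite prZ_coord qei -pia_def /c; field; rewrite pi1 pz1 pz0 //.
move=> z; case zi: (z i); first by rewrite (@prZ_zero _ _ _ z i qi0 zi) !mul0r.
congr (_ * _).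
rewrite exposure_obs // /Yobs !big_bool /= zi /=.
case zei: (z (e i)).
  rewrite (@exposure_of _ A z i (e i) (e_adj i iRa) ei_i zei) /=. field; by rewrite pz1 pz0.
by case: (exposure A z i) => /=; field; rewrite ?pz1 ?pz0.
Qed.
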